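(* Let $\Delta t,\Delta h>0$ satisfy $1-\frac{m\,\Delta t}{\Delta h}\log(1/\epsilon)\ge0$. Define, for real numbers $V_0,V_1,\dots,V_m$, $$G(V_0,V_1,\dots,V_m)=V_0-\Delta t\,\tilde H\Big(\Big(\tfrac{V_j-V_0}{\Delta h}\Big)_{j\in[m]}\Big).$$ Then $G$ is non-decreasing in each of its arguments $V_0,V_1,\dots,V_m$. (Consequently the scheme $V^{n+1}_{\mathbf i}=V^n_{\mathbf i}-\Delta t\,\tilde H\big(((V^n_{\mathbf i+e_j}-V^n_{\mathbf i})/\Delta h)_{j\in[m]}\big)$ on a grid of multi-indices $\mathbf i\in\mathbb Z^m$ is monotone.)
   Context: $\mathcal X$ finite, $\Delta_{\mathcal X}$ the distributions on $\mathcal X$, $\Delta_K$ the simplex on $[K]$, $D$ the KL divergence; $m\ge2$ bandits $\nu^1,\dots,\nu^m$, $\nu^i=(\nu^i_a)_{a\in[K]}$, with $\nu^i_a(x)\ge\epsilon$ for all $i,a,x$, $\epsilon\in(0,1)$. $H(p)=\min_{Q\in(\Delta_{\mathcal X})^K}\max_{w\in\Delta_K}\sum_{i=1}^m\sum_aw(a)D(Q_a\|\nu^i_a)p_i$ for $p\in\mathbb R^m$, and $\tilde H(p)=-H(p)$ (the Hamiltonian of the time-reversed equation). $e_j$ denotes the $j$-th unit multi-index. *)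

(* Defs.v *)
From HB Require Import structures.
From mathcomp Require Import all_boot all_order all_algebra.
From mathcomp Require Import all_classical all_reals all_analysis.
Set Implicit Arguments. Unset Strict Implicit. Unset Printing Implicit Defensive.
Import Order.TTheory GRing.Theory Num.Theory.
Local Open Scope classical_set_scope.
Local Open Scope ring_scope.

Definition is_dist (R : realType) (T : finType) (q : T -> R) : Prop :=
  (forall x, 0 <= q x) /\ \sum_(x : T) q x = 1.

Definition KL (R : realType) (T : finType) (q p : T -> R) : R :=
  \sum_(x : T) (if q x == 0 then 0 else q x * ln (q x / p x)).

Definition Hobj (R : realType) (X : finType) (K m : nat)
  (nu : 'I_m -> 'I_K -> X -> R) (p : 'I_m -> R)
  (Q : 'I_K -> X -> R) (w : 'I_K -> R) : R :=
  \sum_(i < m) \sum_(a < K) w a * KL (Q a) (nu i a) * p i.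

(* H(p) = min_{Q in (Delta_X)^K} max_{w in Delta_K} Hobj  (as inf/sup; both attained) *)
Definition Ham (R : realType) (X : finType) (K m : nat)
  (nu : 'I_m -> 'I_K -> X -> R) (p : 'I_m -> R) : R :=
  inf [set v | exists Q : 'I_K -> X -> R, (forall a, is_dist (Q a)) /\
        v = sup [set u | exists w : 'I_K -> R, is_dist w /\ u = Hobj nu p Q w]].

Definition Hamt (R : realType) (X : finType) (K m : nat)
  (nu : 'I_m -> 'I_K -> X -> R) (p : 'I_m -> R) : R := - Ham nu p.

Definition Gscheme (R : realType) (X : finType) (K m : nat)
  (nu : 'I_m -> 'I_K -> X -> R) (dt dh : R) (V0 : R) (V : 'I_m -> R) : R :=
  V0 - dt * Hamt nu (fun j => (V j - V0) / dh).

(* Main.v *)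
Require Import Defs.
From HB Require Import structures.
From mathcomp Require Import all_boot all_order all_algebra.
From mathcomp Require Import all_classical all_reals all_analysis.
From mathcomp Require Import ring.
Import Order.TTheory GRing.Theory Num.Theory.
Local Open Scope ring_scope.

Section Infsup.
Local Open Scope classical_set_scope.

Lemma infsup_mono (R : realType) (A B : Type) (PA : A -> Prop) (PB : B -> Prop)
  (f g : A -> B -> R) (c M : R) :
  (exists a, PA a) -> (exists b, PB b) ->
  (forall a b, PA a -> PB b -> `|f a b| <= M) ->
  (forall a b, PA a -> PB b -> `|g a b| <= M) ->
  (forall a b, PA a -> PB b -> g a b <= f a b + c) ->
  inf [set v | exists a, PA a /\ v = sup [set u | exists b, PB b /\ u = g a b]]
  <= inf [set v | exists a, PA a /\ v = sup [set u | exists b, PB b /\ u = f a b]] + c.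
Proof.
move=> [a0 Ha0] [b0 Hb0] bf bg gf.
have ubS : forall h : A -> B -> R, (forall a b, PA a -> PB b -> `|h a b| <= M) ->
  forall a, PA a -> has_ubound [set u | exists b, PB b /\ u = h a b].
  move=> h bh a Ha; exists M => u [b [Hb ->]].
  exact: le_trans (ler_norm _) (bh _ _ Ha Hb).
have neS : forall (h : A -> B -> R) a, [set u | exists b, PB b /\ u = h a b] !=set0.
  by move=> h a; exists (h a b0); exists b0.
have lbS : forall h : A -> B -> R, (forall a b, PA a -> PB b -> `|h a b| <= M) ->
  forall a, PA a -> - M <= sup [set u | exists b, PB b /\ u = h a b].
  move=> h bh a Ha; apply: (@le_trans _ _ (h a b0)); last first.
    by apply: (ub_le_sup (ubS h bh a Ha)); exists b0.
  rewrite lerNl (le_trans (ler_norm _)) // normrN; exact: bh.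
have Sle : forall a, PA a -> sup [set u | exists b, PB b /\ u = g a b]
    <= sup [set u | exists b, PB b /\ u = f a b] + c.
  move=> a Ha; apply: ge_sup; first exact: neS.
  move=> u [b [Hb ->]]; rewrite (le_trans (gf _ _ Ha Hb)) // lerD2r.
  by apply: (ub_le_sup (ubS f bf a Ha)); exists b.
rewrite -lerBlDr; apply: lb_le_inf.
  by exists (sup [set u | exists b, PB b /\ u = f a0 b]); exists a0.
move=> v [a [Ha ->]]; rewrite lerBlDr.
apply: le_trans (Sle a Ha); apply: ge_inf.
  exists (- M) => w [a' [Ha' ->]]; exact: lbS.
by exists a.
Qed.
End Infsup.

Lemma dist_le1 (R : realType) (T : finType) (q : T -> R) x : is_dist q -> q x <= 1.
Proof.
move=> [q0 q1]; rewrite -q1 (bigD1 x) //= lerDl; exact: sumr_ge0.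
Qed.

Lemma KL_ub (R : realType) (T : finType) (q p : T -> R) eps :
  0 < eps -> is_dist q -> (forall x, eps <= p x) -> KL q p <= ln (1 / eps).
Proof.
move=> e0 dq pe; have [q0 q1] := dq.
rewrite /KL; set L := ln _; rewrite -[L]mul1r -q1 mulr_suml; apply: ler_sum => x _.
case: ifP => [/eqP -> | qx]; first by rewrite mul0r.
have qp : 0 < q x by rewrite lt_neqAle eq_sym qx q0.
have px : 0 < p x by apply: lt_le_trans (pe x).
rewrite ler_pM2l // ler_ln ?posrE ?divr_gt0 //.
rewrite ler_pdivrMr // mul1r mulrC.
by rewrite (le_trans (dist_le1 _ _ _ x dq)) // ler_pdivlMr // mul1r.
Qed.

Lemma KL_ge0 (R : realType) (T : finType) (q p : T -> R) :
  is_dist q -> is_dist p -> (forall x, 0 < p x) -> 0 <= KL q p.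
Proof.
move=> [q0 q1] [p0 p1] pp.
have -> : (0:R) = \sum_x (q x - p x) by rewrite sumrB q1 p1 subrr.
rewrite /KL; apply: ler_sum => x _.
case: ifP => [/eqP -> | qx]; first by rewrite sub0r lerNl oppr0 p0.
have qp : 0 < q x by rewrite lt_neqAle eq_sym qx q0.
have y0 := divr_gt0 (pp x) qp.
have h : ln (p x / q x) <= p x / q x - 1.
  have := @le_ln1Dx R (p x / q x - 1); rewrite addrCA subrr addr0; apply.
  by rewrite ltrBrDl subrr.
have -> : q x / p x = (p x / q x)^-1 by rewrite invf_div.
rewrite lnV ?posrE // mulrN lerNr opprB.
rewrite -(ler_pM2l qp) in h; apply: (le_trans h).
by rewrite mulrBr mulr1 mulrCA divff ?mulr1 // gt_eqF.
Qed.

Section H.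
Variables (R : realType) (X : finType) (K m : nat) (nu : 'I_m -> 'I_K -> X -> R) (eps : R).
Hypotheses (e0 : 0 < eps) (dnu : forall i a, is_dist (nu i a)) (nue : forall i a x, eps <= nu i a x).
Let L := ln (1 / eps).

Lemma L_ge0 : eps <= 1 -> 0 <= L.
Proof. by move=> e1; rewrite /L ln_ge0 // mul1r -[1]invr1 lef_pV2 ?posrE. Qed.

Let k (Q : 'I_K -> X -> R) (w : 'I_K -> R) i := \sum_a w a * KL (Q a) (nu i a).

Lemma HobjE p Q w : Hobj nu p Q w = \sum_i k Q w i * p i.
Proof. by apply: eq_bigr => i _; rewrite /k mulr_suml. Qed.

Lemma k_bnd Q w i : (forall a, is_dist (Q a)) -> is_dist w -> 0 <= k Q w i <= L.
Proof.
move=> dQ [w0 w1]; apply/andP; split.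
  apply: sumr_ge0 => a _; apply: mulr_ge0 => //; apply: KL_ge0 => // x.
  exact: lt_le_trans (nue i a x).
rewrite /k -[L]mul1r -w1 mulr_suml; apply: ler_sum => a _.
by rewrite ler_wpM2l // KL_ub.
Qed.

Lemma Hobj_shift p p' d Q w : (forall a, is_dist (Q a)) -> is_dist w ->
  0 <= d -> (forall i, p i <= p' i + d) ->
  Hobj nu p Q w <= Hobj nu p' Q w + m%:R * L * d.
Proof.
move=> dQ dw d0 pp; rewrite !HobjE.
have -> : m%:R * L * d = \sum_(i < m) L * d.
  by rewrite sumr_const card_ord mulr_natl mulrnAl.
rewrite -big_split; apply: ler_sum => i _ /=.
have /andP [k0 kL] := k_bnd Q w i dQ dw.
apply: (le_trans (ler_wpM2l k0 (pp i))); rewrite mulrDr lerD2l.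
by rewrite ler_wpM2r.
Qed.

Lemma Hobj_norm p Q w : (forall a, is_dist (Q a)) -> is_dist w ->
  `|Hobj nu p Q w| <= \sum_i L * `|p i|.
Proof.
move=> dQ dw; rewrite HobjE; apply: (le_trans (ler_norm_sum _ _ _)).
apply: ler_sum => i _; have /andP [k0 kL] := k_bnd Q w i dQ dw.
by rewrite normrM ger0_norm // ler_wpM2r.
Qed.
End H.

Lemma Ham_shift (R : realType) (X : finType) (K m : nat)
  (nu : 'I_m -> 'I_K -> X -> R) (eps : R) (p p' : 'I_m -> R) (d : R) :
  (0 < m)%N -> (0 < K)%N -> 0 < eps -> eps <= 1 ->
  (forall i a, is_dist (nu i a)) -> (forall i a x, eps <= nu i a x) ->
  0 <= d -> (forall i, p i <= p' i + d) ->
  Ham nu p <= Ham nu p' + m%:R * ln (1 / eps) * d.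
Proof.
move=> m0 K0 e0 e1 dnu nue d0 pp; rewrite /Ham.
have L0 : 0 <= ln (1 / eps) by rewrite ln_ge0 // mul1r -[1]invr1 lef_pV2 ?posrE.
apply: (@infsup_mono _ _ _ _ _ (Hobj nu p') (Hobj nu p) _ (\sum_i ln (1 / eps) * `|p i| + \sum_i ln (1 / eps) * `|p' i|)).
- by exists (nu (Ordinal m0)) => a; apply: dnu.
- exists (fun a => if a == Ordinal K0 then 1 else 0); split.
    by move=> a; case: ifP.
  rewrite (bigD1 (Ordinal K0)) //= big1 ?addr0 // => a /negbTE -> //.
- move=> Q w dQ dw; apply: (le_trans (@Hobj_norm _ _ _ _ nu eps e0 dnu nue p' Q w dQ dw)).
  rewrite lerDr; apply: sumr_ge0 => i _; apply: mulr_ge0 => //.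
- move=> Q w dQ dw; apply: (le_trans (@Hobj_norm _ _ _ _ nu eps e0 dnu nue p Q w dQ dw)).
  rewrite lerDl; apply: sumr_ge0 => i _; apply: mulr_ge0 => //.
- move=> Q w dQ dw; exact: (@Hobj_shift _ _ _ _ nu eps e0 dnu nue p p' d Q w dQ dw d0 pp).
Qed.

Theorem mainTheorem9 (R : realType) (X : finType) (K m : nat)
  (nu : 'I_m -> 'I_K -> X -> R) (eps dt dh : R) :
  (2 <= m)%N -> (0 < K)%N ->
  0 < eps < 1 ->
  (forall i a, is_dist (nu i a)) ->
  (forall i a x, eps <= nu i a x) ->
  0 < dt -> 0 < dh ->
  0 <= 1 - (m%:R * dt / dh) * ln (1 / eps) ->
  (* non-decreasing in V_0 *)
  (forall (V0 V0' : R) (V : 'I_m -> R),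
      V0 <= V0' -> Gscheme nu dt dh V0 V <= Gscheme nu dt dh V0' V) /\
  (* non-decreasing in each V_j, j in [m] *)
  (forall (j : 'I_m) (V0 : R) (V V' : 'I_m -> R),
      (forall k, k != j -> V k = V' k) -> V j <= V' j ->
      Gscheme nu dt dh V0 V <= Gscheme nu dt dh V0 V').
Proof.
move=> m2 K0 /andP [e0 e1] dnu nue dt0 dh0 hc.
have m0 : (0 < m)%N by apply: leq_trans m2.
have e1' : eps <= 1 by apply: ltW.
have E : forall a b c : R, a - b * - c = a + b * c by move=> *; rewrite mulrN opprK.
split.
- move=> V0 V0' V le.
  have d0 : 0 <= (V0' - V0) / dh by rewrite divr_ge0 ?subr_ge0 // ltW.
  have pp : forall i, (V i - V0) / dh <= (V i - V0') / dh + (V0' - V0) / dh.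
    by move=> i; rewrite -mulrDl addrA subrK.
  have H := @Ham_shift R X K m nu eps (fun j => (V j - V0) / dh) (fun j => (V j - V0') / dh)
    ((V0' - V0) / dh) m0 K0 e0 e1' dnu nue d0 pp.
  rewrite /Gscheme /Hamt !E.
  apply: (@le_trans _ _ (V0 + dt * (Ham nu (fun j => (V j - V0') / dh) +
      m%:R * ln (1 / eps) * ((V0' - V0) / dh)))).
    by rewrite lerD2l ler_pM2l.
  rewrite mulrDr addrA addrAC lerD2r -lerBrDl.
  have -> : dt * (m%:R * ln (1 / eps) * ((V0' - V0) / dh)) =
      (m%:R * dt / dh * ln (1 / eps)) * (V0' - V0) by ring.
  rewrite -[leRHS]mul1r ler_wpM2r ?subr_ge0 //.
  by rewrite -subr_ge0.
- move=> j V0 V V' eqV le.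
  have pp : forall i, (V i - V0) / dh <= (V' i - V0) / dh + 0.
    move=> i; rewrite addr0 ler_pM2r ?invr_gt0 // lerD2r.
    by case: (eqVneq i j) => [-> // | /eqV ->].
  have := @Ham_shift R X K m nu eps (fun j => (V j - V0) / dh) (fun j => (V' j - V0) / dh)
    0 m0 K0 e0 e1' dnu nue (lexx 0) pp.
  rewrite mulr0 addr0 => H; rewrite /Gscheme /Hamt !E lerD2l.
  by rewrite ler_pM2l.
Qed.
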